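(* Let $n\ge1$ and $1\le m\le n$ be integers, $x>0$, and $\Delta\equiv\lfloor\frac{n+1}{m+1}\rfloor$. Let $\Delta_1,\dots,\Delta_{m+1}\in\{\Delta,\Delta+1\}$ be integers with $\sum_{k=1}^{m+1}\Delta_k=n+1$, and let $\boldsymbol v^*\in\mathbb{R}^n$ have $i$-th coordinate $x$ if $i\in\{\sum_{k=1}^{j}\Delta_k:1\le j\le m\}$ and $0$ otherwise. Then $\boldsymbol v^*$ minimizes $f$ over $\Lambda(mx)$, and \[ \min_{\boldsymbol v\in\Lambda(mx)} f(\boldsymbol v)=f(\boldsymbol v^* )=\Delta(n+1)x-\tfrac12(m+1)x\,\Delta(\Delta+1). \] Moreover, for every $\boldsymbol v\in\Lambda(mx)$ and every $1\le j\le n$, $\sum_{l=1}^{n+1-j}\bigl(x-\sum_{i=l}^{l+j-1}v_i\bigr)^+\ge\sum_{l=1}^{n+1-j}\bigl(x-\sum_{i=l}^{l+j-1}v^*_i\bigr)^+$.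
   Context: For $w>0$, $\Lambda(w)$ is the set of vectors in $\mathbb{R}^n$ with nonnegative coordinates summing to $w$. For $\boldsymbol v=(v_1,\dots,v_n)$, $f(\boldsymbol v)\equiv\sum_{1\le l\le k\le n}\bigl(x-\sum_{i=l}^k v_i\bigr)^+$, where $a^+=\max\{a,0\}$. *)

(* Defs.v *)
(* Vectors in R^n are functions 'I_n -> R; indices are
   0-based here (coordinate i of the paper is index i-1). *)
From mathcomp Require Import all_boot all_order all_algebra.
Set Implicit Arguments. Unset Strict Implicit. Unset Printing Implicit Defensive.
Import Order.TTheory GRing.Theory Num.Theory.
Local Open Scope ring_scope.

Definition pospart (R : realFieldType) (a : R) : R := Num.max a 0.

Definition Lambda (R : realFieldType) (n : nat) (w : R) (v : 'I_n -> R) : Prop :=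
  (forall i, 0 <= v i) /\ \sum_(i < n) v i = w.

Definition segsum (R : realFieldType) (n : nat) (v : 'I_n -> R) (l k : nat) : R :=
  \sum_(i < n | (l <= i)%N && (i <= k)%N) v i.

Definition fobj (R : realFieldType) (n : nat) (x : R) (v : 'I_n -> R) : R :=
  \sum_(l < n) \sum_(k < n | (l <= k)%N) pospart (x - segsum v l k).

(* sum_{l=1}^{n+1-j} (x - sum_{i=l}^{l+j-1} v_i)^+ , 0-based l from 0 to n-j *)
Definition window_obj (R : realFieldType) (n : nat) (x : R) (v : 'I_n -> R) (j : nat) : R :=
  \sum_(l < n | (l + j <= n)%N) pospart (x - segsum v l (l + j - 1)).

(* v*: coordinate i (1-based) equals x iff i = sum_{k=1}^{j} Delta_k for some
   1 <= j <= m; d : 'I_(m+1) -> nat lists Delta_1..Delta_{m+1}. *)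
Definition vstar (R : realFieldType) (n m : nat) (x : R) (d : 'I_m.+1 -> nat) : 'I_n -> R :=
  fun i => if [exists j : 'I_m.+1, (0 < j)%N && (i.+1 == \sum_(k < m.+1 | (k < j)%N) d k)%N]
           then x else 0.

(* Main.v *)
Require Import Defs.
From mathcomp Require Import all_boot all_order all_algebra.
From mathcomp Require Import zify ring lra.
Set Implicit Arguments. Unset Strict Implicit. Unset Printing Implicit Defensive.
Import Order.TTheory GRing.Theory Num.Theory.
Local Open Scope ring_scope.

Definition ext (R : realFieldType) (n : nat) (v : 'I_n -> R) (i : nat) : R :=
  oapp v 0 (insub i).

Lemma extE (R : realFieldType) n (v : 'I_n -> R) (i : 'I_n) : ext v i = v i.
Proof. by rewrite /ext valK. Qed.

Lemma ext_out (R : realFieldType) n (v : 'I_n -> R) i : (n <= i)%N -> ext v i = 0.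
Proof. by move=> h; rewrite /ext insubF // ltnNge h. Qed.

Lemma sum_ext (R : realFieldType) n (v : 'I_n -> R) :
  \sum_(i < n) v i = \sum_(0 <= i < n) ext v i.
Proof. by rewrite big_mkord; apply: eq_bigr => i _; rewrite extE. Qed.

Lemma sum_shift (R : realFieldType) (F : nat -> R) a j :
  \sum_(a <= i < a + j) F i = \sum_(t < j) F (a + t)%N.
Proof.
elim: j => [|j IH]; first by rewrite addn0 big_geq // big_ord0.
by rewrite addnS big_nat_recr ?leq_addr //= IH big_ord_recr.
Qed.

Lemma segsumE (R : realFieldType) n (v : 'I_n -> R) l j : (0 < j)%N -> (l + j <= n)%N ->
  segsum v l (l + j - 1) = \sum_(t < j) ext v (l + t)%N.
Proof.
move=> j0 hn; rewrite /segsum -sum_shift.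
rewrite (eq_bigr (fun i : 'I_n => ext v i)); last by move=> i _; rewrite extE.
rewrite -(big_mkord (fun i => (l <= i) && (i <= l + j - 1))%N (ext v)) big_mkcond /=.
rewrite (@big_cat_nat _ _ _ l 0 n) /=; [|by []|lia].
rewrite (@big_cat_nat _ _ _ (l + j) l n) /=; [|lia|lia].
rewrite big_nat_cond big1; last by move=> i /andP[/andP[_ hi] _]; rewrite leqNgt hi.
rewrite add0r [X in _ + X]big_nat_cond [X in _ + X]big1 ?addr0; last first.
  by move=> i /andP[/andP[hi _] _]; case: ifP => //; lia.
rewrite big_nat_cond [RHS]big_nat_cond; apply: eq_bigr => i /andP[/andP[h1 h2] _].
by case: ifP => //; lia.
Qed.

Lemma subrange (R : realFieldType) (F : nat -> R) a b c d :
  (forall i, 0 <= F i) -> (a <= b)%N -> (b <= c)%N -> (c <= d)%N ->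
  \sum_(b <= i < c) F i <= \sum_(a <= i < d) F i.
Proof.
move=> F0 ab bc cd.
rewrite (@big_cat_nat _ _ _ b a d) //=; last by lia.
rewrite (@big_cat_nat _ _ _ c b d) //=.
rewrite addrC -addrA lerDl addr_ge0 //; by apply: sumr_ge0.
Qed.

Lemma windowE (R : realFieldType) n (x : R) (v : 'I_n -> R) j :
  (1 <= j)%N -> (j <= n)%N ->
  window_obj x v j = \sum_(l < n.+1 - j) pospart (x - \sum_(t < j) ext v (l + t)%N).
Proof.
move=> j1 jn; rewrite /window_obj [RHS](@big_ord_widen _ 0 +%R (n.+1 - j) n (fun l => pospart (x - \sum_(t < j) ext v (l + t)%N))); last by lia.
apply: eq_big => [l|l hl]; first by apply/idP/idP; lia.
by rewrite segsumE //.
Qed.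

Lemma pospart_ge (R : realFieldType) (a : R) : a <= pospart a.
Proof. by rewrite /pospart le_max lexx. Qed.

Lemma pospart_ge0 (R : realFieldType) (a : R) : 0 <= pospart a.
Proof. by rewrite /pospart le_max lexx orbT. Qed.

Lemma window_lb (R : realFieldType) n (x w : R) (v : 'I_n -> R) j :
  Lambda w v -> (1 <= j)%N -> (j <= n)%N ->
  (n.+1 - j)%:R * x - j%:R * w <= window_obj x v j.
Proof.
move=> [v0 vs] j1 jn; rewrite windowE //.
apply: le_trans (ler_sum _ (fun l _ => pospart_ge _)).
rewrite sumrB sumr_const card_ord -[x *+ _]mulr_natl lerD2l lerN2 exchange_big /=.
apply: (@le_trans _ _ (\sum_(t < j) w)); last by rewrite sumr_const card_ord mulr_natl.
apply: ler_sum => t _; rewrite -vs sum_ext.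
rewrite (eq_bigr (fun l : 'I_(n.+1 - j) => ext v (t + l)%N)); last by move=> l _; rewrite addnC.
rewrite -sum_shift; apply: subrange; [|lia|lia|have := ltn_ord t; lia].
by move=> i; rewrite /ext; case: insub => //= k; exact: v0.
Qed.

Definition sp (m : nat) (d : 'I_m.+1 -> nat) (t : nat) : nat :=
  \sum_(k < m.+1 | (k < t)%N) d k.

Lemma sp0 m (d : 'I_m.+1 -> nat) : sp d 0 = 0%N.
Proof. by rewrite /sp big_pred0. Qed.

Lemma spS m (d : 'I_m.+1 -> nat) t (ht : (t < m.+1)%N) :
  sp d t.+1 = (sp d t + d (Ordinal ht))%N.
Proof.
rewrite /sp (bigD1 (Ordinal ht)) //= addnC; congr (_ + _)%N.
apply: eq_bigl => k; rewrite ltnS leq_eqVlt -val_eqE /=.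
by case: ltngtP.
Qed.

Lemma spfull m (d : 'I_m.+1 -> nat) : sp d m.+1 = (\sum_k d k)%N.
Proof. by rewrite /sp; apply: eq_bigl => k; rewrite ltn_ord. Qed.

Lemma spgap m D (d : 'I_m.+1 -> nat) a b : (forall k, D <= d k)%N ->
  (a <= b)%N -> (b <= m.+1)%N -> (sp d a + (b - a) * D <= sp d b)%N.
Proof.
move=> hD ab; elim: b ab => [|b IH] ab bm.
  by move: ab; rewrite leqn0 => /eqP ->; rewrite sub0n mul0n addn0.
move: ab; rewrite leq_eqVlt => /orP[/eqP<-|ab]; first by rewrite subnn mul0n addn0.
have hb : (b < m.+1)%N by [].
rewrite (spS d hb); have := IH ab (ltnW hb); have := hD (Ordinal hb).
rewrite subSn //; lia.
Qed.

Definition mark m (d : 'I_m.+1 -> nat) (i : nat) : bool :=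
  [exists j : 'I_m.+1, (0 < j)%N && (i.+1 == sp d j)].

Lemma vstarE (R : realFieldType) n m (x : R) d (i : 'I_n) :
  @vstar R n m x d i = if mark d i then x else 0.
Proof. by []. Qed.

Lemma markP m (d : 'I_m.+1 -> nat) i :
  reflect (exists2 j : 'I_m.+1, (0 < j)%N & i.+1 = sp d j) (mark d i).
Proof.
apply: (iffP existsP) => [[j /andP[h /eqP e]]|[j h e]]; first by exists j.
by exists j; rewrite h e eqxx.
Qed.

Lemma mark_range n m D (d : 'I_m.+1 -> nat) i :
  (forall k, D <= d k)%N -> (\sum_k d k = n.+1)%N -> mark d i ->
  (D <= i.+1)%N /\ (i.+1 + D <= n.+1)%N.
Proof.
move=> hD hs /markP[j j0 ->]; split.
  have := spgap hD j0 (ltnW (ltn_ord j)).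
  rewrite (spS d (ltn0Sn m)) sp0 add0n; have := hD (Ordinal (ltn0Sn m)); nia.
have hm : (m < m.+1)%N by [].
have hj : (j <= m)%N by rewrite -ltnS.
rewrite -hs -spfull (spS d hm).
have := hD (Ordinal hm); have := spgap hD hj (ltnW hm); nia.
Qed.

Lemma mark_sep m D (d : 'I_m.+1 -> nat) i1 i2 :
  (forall k, D <= d k)%N -> mark d i1 -> mark d i2 -> (i1 < i2)%N -> (i1 + D <= i2)%N.
Proof.
move=> hD /markP[j1 _ e1] /markP[j2 _ e2] lt12.
case: (leqP j2 j1) => h.
  have := spgap hD h (ltnW (ltn_ord j1)); nia.
have := spgap hD (ltnW h) (ltnW (ltn_ord j2)).
have : (D <= (j2 - j1) * D)%N by apply: leq_pmull; lia.
lia.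
Qed.

Lemma mark_cover n m D (d : 'I_m.+1 -> nat) l :
  (forall k, D <= d k <= D.+1)%N -> (\sum_k d k = n.+1)%N -> (l + D.+1 <= n)%N ->
  exists2 t, (t <= D)%N & mark d (l + t)%N.
Proof.
move=> hD hs hl.
have hD1 : forall k, (D <= d k)%N by move=> k; case/andP: (hD k).
have exP : exists k, (k <= m)%N && (sp d k <= l)%N by exists 0%N; rewrite sp0.
have ubP : forall k, (k <= m)%N && (sp d k <= l)%N -> (k <= m)%N by move=> k /andP[].
case: (ex_maxnP exP ubP) => k /andP[km skl] kmax.
have hk : (k < m.+1)%N by [].
have e := spS d hk; have := hD (Ordinal hk) => /andP[_ dk].
case: (ltnP k m) => km'.
  have hk1 : (k.+1 < m.+1)%N by [].
  have gt : (l < sp d k.+1)%N.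
    rewrite ltnNge; apply/negP => h; have := kmax k.+1; rewrite km' h => /(_ isT); lia.
  exists (sp d k.+1 - l.+1)%N; first lia.
  apply/markP; exists (Ordinal hk1) => //=; lia.
have km2 : k = m by lia.
have : sp d k.+1 = n.+1 by rewrite km2 spfull hs.
lia.
Qed.

Lemma sp_inj m D (d : 'I_m.+1 -> nat) (j1 j2 : 'I_m.+1) :
  (forall k, D <= d k)%N -> (0 < D)%N -> sp d j1 = sp d j2 -> j1 = j2.
Proof.
move=> hD D0 e; apply: val_inj => /=.
case: (ltngtP j1 j2) => // h.
  have := spgap hD (ltnW h) (ltnW (ltn_ord j2)).
  have : (D <= (j2 - j1) * D)%N by apply: leq_pmull; lia.
  lia.
have := spgap hD (ltnW h) (ltnW (ltn_ord j1)).
have : (D <= (j1 - j2) * D)%N by apply: leq_pmull; lia.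
lia.
Qed.

Lemma sp_range n m D (d : 'I_m.+1 -> nat) (j : 'I_m.+1) :
  (forall k, D <= d k)%N -> (\sum_k d k = n.+1)%N -> (0 < j)%N ->
  (D <= sp d j)%N /\ (sp d j + D <= n.+1)%N.
Proof.
move=> hD hs j0; split.
  have := spgap hD j0 (ltnW (ltn_ord j)).
  rewrite (spS d (ltn0Sn m)) sp0 add0n; have := hD (Ordinal (ltn0Sn m)); nia.
have hm : (m < m.+1)%N by [].
have hj : (j <= m)%N by rewrite -ltnS.
rewrite -hs -spfull (spS d hm).
have := hD (Ordinal hm); have := spgap hD hj (ltnW hm); nia.
Qed.

Lemma mark_count n m D (d : 'I_m.+1 -> nat) :
  (forall k, D <= d k)%N -> (0 < D)%N -> (\sum_k d k = n.+1)%N ->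
  (\sum_(i < n) mark d i = m)%N.
Proof.
move=> hD D0 hs.
have pw : forall i : nat, (mark d i : nat) = (\sum_(j : 'I_m.+1 | (0 < j)%N) (i.+1 == sp d j))%N.
  move=> i; case: (boolP (mark d i)) => [/markP[j0 j00 e]|nm].
    rewrite (bigD1 j0) //= e eqxx big1 // => j /andP[_ ne].
    case: eqP => //= e'; exfalso; move/eqP: ne; apply; apply: (sp_inj hD D0); lia.
  rewrite big1 // => j j0; case: eqP => //= e; exfalso.
  by apply: (negP nm); apply/markP; exists j.
under eq_bigr do rewrite pw.
rewrite exchange_big /=.
rewrite (eq_bigr (fun _ => 1%N)); last first.
  move=> j j0; have [h1 h2] := sp_range hD hs j0.
  have hi : ((sp d j).-1 < n)%N by lia.
  rewrite (bigD1 (Ordinal hi)) //= prednK ?eqxx; last by lia.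
  rewrite big1 // => i ne; case: eqP => //= e.
  by exfalso; move/eqP: ne; apply; apply: val_inj => /=; lia.
rewrite big_mkcond big_ord_recl /= add0n.
by rewrite sum_nat_const card_ord muln1.
Qed.

Lemma ext_vstar (R : realFieldType) n m D (x : R) (d : 'I_m.+1 -> nat) i :
  (forall k, D <= d k)%N -> (0 < D)%N -> (\sum_k d k = n.+1)%N ->
  ext (@vstar R n m x d) i = if mark d i then x else 0.
Proof.
move=> hD D0 hs; rewrite /ext; case: insubP => [k _ <-|] /=; first by [].
rewrite -leqNgt => hi; case: ifP => // /(mark_range hD hs) [_ h]; exfalso; lia.
Qed.

Lemma sum_vstar (R : realFieldType) n m D (x : R) (d : 'I_m.+1 -> nat) :
  (forall k, D <= d k)%N -> (0 < D)%N -> (\sum_k d k = n.+1)%N ->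
  \sum_(i < n) @vstar R n m x d i = m%:R * x.
Proof.
move=> hD D0 hs.
rewrite (eq_bigr (fun i : 'I_n => (mark d i)%:R * x)); last first.
  by move=> i _; rewrite vstarE; case: mark; rewrite ?mul1r ?mul0r.
by rewrite -mulr_suml -natr_sum (mark_count hD D0 hs).
Qed.

Lemma vs_small (R : realFieldType) n m D (x : R) (d : 'I_m.+1 -> nat) j :
  (forall k, D <= d k)%N -> (0 < D)%N -> (\sum_k d k = n.+1)%N -> 0 < x ->
  (1 <= j)%N -> (j <= n)%N -> (j <= D)%N ->
  window_obj x (@vstar R n m x d) j = (n.+1 - j)%:R * x - j%:R * (m%:R * x).
Proof.
move=> hD D0 hs x0 j1 jn jD; rewrite windowE //.
set V := ext (@vstar R n m x d).
have VE : forall i, V i = if mark d i then x else 0 by move=> i; apply: ext_vstar hD D0 hs.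
have V0 : forall i, 0 <= V i by move=> i; rewrite VE; case: mark => //; exact: ltW.
have Sle : forall l : nat, \sum_(t < j) V (l + t)%N <= x.
  move=> l; case: (pickP (fun t : 'I_j => mark d (l + t)%N)) => [t0 mt0|nm]; last first.
    by rewrite big1 ?ltW // => t _; rewrite VE nm.
  rewrite (bigD1 t0) //= big1 ?addr0; first by rewrite VE mt0.
  move=> t ne; rewrite VE; case: ifP => // mt; exfalso.
  have := ltn_ord t; have := ltn_ord t0.
  case: (ltngtP t t0) => h.
  - have := mark_sep hD mt mt0; lia.
  - have := mark_sep hD mt0 mt; lia.
  - by move=> _ _; move/eqP: ne; apply; apply: val_inj.
rewrite (eq_bigr (fun l : 'I_(n.+1 - j) => x - \sum_(t < j) V (l + t)%N)); last first.
  move=> l _; rewrite /pospart max_l // subr_ge0; exact: Sle.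
rewrite sumrB sumr_const card_ord -[x *+ _]mulr_natl; congr (_ - _).
rewrite exchange_big /= -[j in RHS]card_ord -sumr_const.
rewrite mulr_suml; apply: eq_bigr => t _; rewrite mul1r.
rewrite (eq_bigr (fun l : 'I_(n.+1 - j) => V (t + l)%N)); last by move=> l _; rewrite addnC.
rewrite -sum_shift -(@sum_vstar R n m D x d hD D0 hs) sum_ext -/V.
rewrite (@big_cat_nat _ _ _ t 0 n) //=; last by have := ltn_ord t; lia.
rewrite (@big_cat_nat _ _ _ (t + (n.+1 - j)) t n) //=; [|lia|have := ltn_ord t; lia].
symmetry; rewrite big_nat_cond big1 ?add0r; last first.
  move=> i /andP[/andP[_ hi] _]; rewrite VE; case: ifP => // /(mark_range hD hs) [h1 h2].
  exfalso; have := ltn_ord t; lia.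
rewrite [X in _ + X = _]big_nat_cond [X in _ + X = _]big1 ?addr0 //.
move=> i /andP[/andP[hi _] _]; rewrite VE; case: ifP => // /(mark_range hD hs) [h1 h2].
exfalso; have := ltn_ord t; lia.
Qed.

Lemma vs_large (R : realFieldType) n m D (x : R) (d : 'I_m.+1 -> nat) j :
  (forall k, D <= d k <= D.+1)%N -> (0 < D)%N -> (\sum_k d k = n.+1)%N -> 0 < x ->
  (j <= n)%N -> (D < j)%N ->
  window_obj x (@vstar R n m x d) j = 0.
Proof.
move=> hD D0 hs x0 jn jD.
have hD1 : forall k, (D <= d k)%N by move=> k; case/andP: (hD k).
rewrite windowE //; last by lia.
set V := ext (@vstar R n m x d).
have VE : forall i, V i = if mark d i then x else 0 by move=> i; apply: ext_vstar hD1 D0 hs.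
have V0 : forall i, 0 <= V i by move=> i; rewrite VE; case: mark => //; exact: ltW.
apply: big1 => l _.
have [t tD mt] : exists2 t, (t <= D)%N & mark d (l + t)%N.
  by apply: (mark_cover hD hs); have := ltn_ord l; lia.
have tj : (t < j)%N by lia.
rewrite /pospart max_r // subr_le0 (bigD1 (Ordinal tj)) //= VE mt lerDl.
by apply: sumr_ge0 => i _.
Qed.

Lemma window_ge0 (R : realFieldType) n (x : R) (v : 'I_n -> R) j : 0 <= window_obj x v j.
Proof. by apply: sumr_ge0 => l _; apply: pospart_ge0. Qed.

Lemma fobj_win (R : realFieldType) n (x : R) (v : 'I_n -> R) :
  fobj x v = \sum_(j < n) window_obj x v j.+1.
Proof.
set g := fun l k : nat => pospart (x - segsum v l k).
have W : forall j : 'I_n, window_obj x v j.+1 =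
    \sum_(l < n) (if (l + j < n)%N then g l (l + j)%N else 0).
  move=> j; rewrite /window_obj big_mkcond; apply: eq_bigr => l _.
  by rewrite addnS subn1 /=.
rewrite (eq_bigr _ (fun j _ => W j)) exchange_big /=.
rewrite /fobj; apply: eq_bigr => l _.
rewrite -big_mkcond /=.
rewrite -(big_mkord (fun j => (l + j < n)%N) (fun j => g l (l + j)%N)).
rewrite -(big_geq_mkord l n xpredT (fun k => g l k)) /=.
rewrite -{1}[l : nat]add0n big_addn.
rewrite (big_nat_widen _ _ n); last by apply: leq_subr.
apply: congr_big_nat => // [j|j _]; first by rewrite ltn_subRL addnC.
by rewrite addnC.
Qed.

Lemma arith (R : realFieldType) (n m D : nat) (x : R) :
  \sum_(j < D) ((n.+1)%:R * x - (j.+1)%:R * x - (j.+1)%:R * (m%:R * x)) =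
  D%:R * (n.+1)%:R * x - 2^-1 * (m.+1)%:R * x * D%:R * (D.+1)%:R.
Proof.
elim: D => [|D IH]; first by rewrite big_ord0 !mulr0 !mul0r subrr.
rewrite big_ord_recr /= IH.
rewrite -[(D.+2)%:R]natr1 -[(D.+1)%:R]natr1 -[(m.+1)%:R]natr1.
by field.
Qed.

Theorem mainTheorem3 (R : realFieldType) (n m : nat) (x : R) (d : 'I_m.+1 -> nat) :
  (1 <= n)%N -> (1 <= m)%N -> (m <= n)%N -> 0 < x ->
  (forall k, d k = ((n.+1) %/ (m.+1))%N \/ d k = ((n.+1) %/ (m.+1)).+1) ->
  (\sum_(k < m.+1) d k)%N = n.+1 ->
  let Delta := ((n.+1) %/ (m.+1))%N in
  let vs := @vstar R n m x d in
  [/\ Lambda (m%:R * x) vs,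
      (forall v : 'I_n -> R, Lambda (m%:R * x) v -> fobj x vs <= fobj x v),
      fobj x vs = Delta%:R * (n.+1)%:R * x - 2^-1 * (m.+1)%:R * x * Delta%:R * (Delta.+1)%:R
    & forall v : 'I_n -> R, Lambda (m%:R * x) v ->
        forall j : nat, (1 <= j)%N -> (j <= n)%N -> window_obj x v j >= window_obj x vs j].
Proof.
move=> n1 m1 mn x0 hd hs Delta vs.
have D0 : (0 < Delta)%N by rewrite divn_gt0.
have Dmul : (Delta * m.+1 <= n.+1)%N by apply: leq_trunc_div.
have Dn : (Delta <= n)%N by nia.
have hD : forall k, (Delta <= d k <= Delta.+1)%N.
  by move=> k; case: (hd k) => ->; rewrite /Delta ?leqnn ?leqnSn.
have hD1 : forall k, (Delta <= d k)%N by move=> k; case/andP: (hD k).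
have L : Lambda (m%:R * x) vs.
  split; last exact: (@sum_vstar R n m Delta x d hD1 D0 hs).
  by move=> i; rewrite /vs vstarE; case: mark => //; exact: ltW.
have P4 : forall v : 'I_n -> R, Lambda (m%:R * x) v ->
    forall j : nat, (1 <= j)%N -> (j <= n)%N -> window_obj x v j >= window_obj x vs j.
  move=> v Lv j j1 jn; case: (leqP j Delta) => jD.
    rewrite /vs (@vs_small R n m Delta x d j hD1 D0 hs x0 j1 jn jD); exact: window_lb.
  by rewrite /vs (@vs_large R n m Delta x d j hD D0 hs x0 jn jD); apply: window_ge0.
split => //.
  by move=> v Lv; rewrite !fobj_win; apply: ler_sum => j _; apply: P4.
rewrite fobj_win (bigID (fun j : 'I_n => (j < Delta)%N)) /=.
rewrite [X in _ + X]big1 ?addr0; last first.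
  by move=> j; rewrite -leqNgt => jD; rewrite /vs (@vs_large R n m Delta x d j.+1 hD D0 hs x0).
rewrite -(big_ord_widen _ (fun j => window_obj x vs j.+1) Dn).
rewrite -(@arith R n m Delta x); apply: eq_bigr => j _.
rewrite /vs (@vs_small R n m Delta x d j.+1 hD1 D0 hs x0) //; last by have := ltn_ord j; lia.
rewrite natrB; last by have := ltn_ord j; lia.
by rewrite mulrBl.
Qed.
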